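(* Assume $a/b>\sqrt2$ and let $u$ satisfy $|u|<u_{\max}$. Then the four vertices $P_1,P_2,P_3,P_4$ of the self-intersected 4-periodic with parameter $u$ and the two foci $f_1=(-c,0)$, $f_2=(c,0)$ lie on the circle with center $$C=\left(0,\ \frac{c^2u^2-a^2+2b^2}{2b\sqrt{1-u^2}}\right)\quad\text{and radius}\quad R=\frac{a^2-c^2u^2}{2b\sqrt{1-u^2}}.$$ Moreover, whenever $a^2+(u^2-2)c^2\neq 0$, the four vertices of the outer polygon and the two foci lie on the circle with center $$C'=\left(0,\ -\frac{2bc^2\sqrt{1-u^2}}{a^2+(u^2-2)c^2}\right)\quad\text{and radius}\quad |R'|,\qquad R'=\frac{c\,(c^2u^2-a^2)}{a^2+(u^2-2)c^2}.$$
   Context: The elliptic billiard is $\mathcal{E}: x^2/a^2+y^2/b^2=1$, $a>b>0$, $c=\sqrt{a^2-b^2}$, foci $f_1=(-c,0)$, $f_2=(c,0)$. For $a/b>\sqrt2$ the self-intersected 4-periodics (closed 4-bounce billiard trajectories tangent to the confocal hyperbola $x^2/a''^2-y^2/b''^2=1$, $a''=a\sqrt{a^2-2b^2}/c$, $b''=b^2/c$) are parametrized by $u$ with $|u|\le u_{\max}:=\frac{a}{c^2}\sqrt{a^2-2b^2}$: $P_1=(au,\,b\sqrt{1-u^2})$, $P_3=(-au,\,b\sqrt{1-u^2})$, $P_2=\left(-\frac{a\sqrt{a^2(a^2-2b^2)-c^4u^2}}{c^2\sqrt{1-u^2}},\,-\frac{b^3}{c^2\sqrt{1-u^2}}\right)$,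 $P_4=\left(\frac{a\sqrt{a^2(a^2-2b^2)-c^4u^2}}{c^2\sqrt{1-u^2}},\,-\frac{b^3}{c^2\sqrt{1-u^2}}\right)$. The outer polygon has vertices $P_i'$, $i=1,\dots,4$, where $P_i'$ is the intersection point of the tangent lines to $\mathcal{E}$ at $P_i$ and at $P_{i+1}$ (indices mod 4). *)

(* Defs.v *)
From Stdlib Require Import Reals.
Open Scope R_scope.

(* Elliptic billiard x^2/a^2 + y^2/b^2 = 1, c = sqrt(a^2-b^2). *)
Definition cfoc (a b : R) : R := sqrt (a^2 - b^2).

Definition umax (a b : R) : R := a / (cfoc a b)^2 * sqrt (a^2 - 2*b^2).

Definition P1 (a b u : R) : R * R := (a*u, b * sqrt (1 - u^2)).
Definition P3 (a b u : R) : R * R := (- (a*u), b * sqrt (1 - u^2)).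
Definition P2 (a b u : R) : R * R :=
  let c := cfoc a b in
  (- (a * sqrt (a^2*(a^2 - 2*b^2) - c^4*u^2) / (c^2 * sqrt (1 - u^2))),
   - (b^3 / (c^2 * sqrt (1 - u^2)))).
Definition P4 (a b u : R) : R * R :=
  let c := cfoc a b in
  (a * sqrt (a^2*(a^2 - 2*b^2) - c^4*u^2) / (c^2 * sqrt (1 - u^2)),
   - (b^3 / (c^2 * sqrt (1 - u^2)))).

Definition on_tangent (a b : R) (P Q : R * R) : Prop :=
  fst Q * fst P / a^2 + snd Q * snd P / b^2 = 1.

Definition tangent_intersection (a b : R) (P P' Q : R * R) : Prop :=
  on_tangent a b P Q /\ on_tangent a b P' Q.

Definition on_circle (C : R * R) (r : R) (Q : R * R) : Prop :=
  (fst Q - fst C)^2 + (snd Q - snd C)^2 = r^2.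

(* Main.v *)
Require Import Defs.
From Stdlib Require Import Reals Lra.
Open Scope R_scope.

Lemma G1 (a b c s v t : R) (r1 : t^2 = a^2*(a^2-2*b^2) - c^4*v^2) (r2 : s^2 = 1 - v^2) (r3 : c^2 = a^2 - b^2) :
  (a*v)^2*(2*b*s)^2 + (b*s*(2*b*s) - (c^2*v^2-a^2+2*b^2))^2 - (a^2-c^2*v^2)^2 = 0.
Proof.
  assert (H : (a*v)^2*(2*b*s)^2 + (b*s*(2*b*s) - (c^2*v^2-a^2+2*b^2))^2 - (a^2-c^2*v^2)^2 = (0)*(t^2 - (a^2*(a^2-2*b^2) - c^4*v^2)) + ((-4)*b^2*c^2*v^2 + (-4)*b^4 + (-4)*b^4*v^2 + (4)*b^4*s^2 + (4)*a^2*b^2 + (4)*a^2*b^2*v^2)*(s^2 - (1 - v^2)) + ((4)*b^2*v^4)*(c^2 - (a^2 - b^2))) by ring.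
  rewrite H, r1, r2, r3. ring.
Qed.

Lemma G3 (a b c s v t : R) (r1 : t^2 = a^2*(a^2-2*b^2) - c^4*v^2) (r2 : s^2 = 1 - v^2) (r3 : c^2 = a^2 - b^2) :
  (-(a*v))^2*(2*b*s)^2 + (b*s*(2*b*s) - (c^2*v^2-a^2+2*b^2))^2 - (a^2-c^2*v^2)^2 = 0.
Proof.
  assert (H : (-(a*v))^2*(2*b*s)^2 + (b*s*(2*b*s) - (c^2*v^2-a^2+2*b^2))^2 - (a^2-c^2*v^2)^2 = (0)*(t^2 - (a^2*(a^2-2*b^2) - c^4*v^2)) + ((-4)*b^2*c^2*v^2 + (-4)*b^4 + (-4)*b^4*v^2 + (4)*b^4*s^2 + (4)*a^2*b^2 + (4)*a^2*b^2*v^2)*(s^2 - (1 - v^2)) + ((4)*b^2*v^4)*(c^2 - (a^2 - b^2))) by ring.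
  rewrite H, r1, r2, r3. ring.
Qed.

Lemma G2 (a b c s v t : R) (r1 : t^2 = a^2*(a^2-2*b^2) - c^4*v^2) (r2 : s^2 = 1 - v^2) (r3 : c^2 = a^2 - b^2) :
  (a*t*(2*b*s))^2 + (b^3*(2*b*s) + (c^2*v^2-a^2+2*b^2)*c^2*s)^2 - ((a^2-c^2*v^2)*c^2*s)^2 = 0.
Proof.
  assert (H : (a*t*(2*b*s))^2 + (b^3*(2*b*s) + (c^2*v^2-a^2+2*b^2)*c^2*s)^2 - ((a^2-c^2*v^2)*c^2*s)^2 = ((4)*a^2*b^2*s^2)*(t^2 - (a^2*(a^2-2*b^2) - c^4*v^2)) + ((4)*b^2*c^6*v^2 + (4)*b^4*c^4 + (4)*b^4*c^4*v^2 + (8)*b^6*c^2 + (4)*b^8 + (-4)*a^2*b^2*c^4 + (-4)*a^2*b^2*c^4*v^2 + (-4)*a^2*b^4*c^2 + (-8)*a^4*b^4 + (4)*a^6*b^2)*(s^2 - (1 - v^2)) + ((4)*b^2*c^4*v^2 + (-4)*b^2*c^4*v^4 + (4)*b^4*c^2 + (-4)*b^4*c^2*v^2 + (4)*b^6 + (-4)*b^6*v^2 + (-4)*a^2*b^2*c^2 + (4)*a^2*b^2*c^2*v^2 + (4)*a^2*b^4 + (-4)*a^2*b^4*v^2 + (-4)*a^4*b^2 + (4)*a^4*b^2*v^2)*(c^2 - (a^2 - b^2))) by ring.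
  rewrite H, r1, r2, r3. ring.
Qed.

Lemma GF (a b c s v t : R) (r1 : t^2 = a^2*(a^2-2*b^2) - c^4*v^2) (r2 : s^2 = 1 - v^2) (r3 : c^2 = a^2 - b^2) :
  c^2*(2*b*s)^2 + (c^2*v^2-a^2+2*b^2)^2 - (a^2-c^2*v^2)^2 = 0.
Proof.
  assert (H : c^2*(2*b*s)^2 + (c^2*v^2-a^2+2*b^2)^2 - (a^2-c^2*v^2)^2 = (0)*(t^2 - (a^2*(a^2-2*b^2) - c^4*v^2)) + ((4)*b^2*c^2)*(s^2 - (1 - v^2)) + ((4)*b^2)*(c^2 - (a^2 - b^2))) by ring.
  rewrite H, r1, r2, r3. ring.
Qed.

Lemma GF2 (a b c s v t : R) (r1 : t^2 = a^2*(a^2-2*b^2) - c^4*v^2) (r2 : s^2 = 1 - v^2) (r3 : c^2 = a^2 - b^2) :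
  c^2*(a^2+(v^2-2)*c^2)^2 + (2*b*c^2*s)^2 - (c*(c^2*v^2-a^2))^2 = 0.
Proof.
  assert (H : c^2*(a^2+(v^2-2)*c^2)^2 + (2*b*c^2*s)^2 - (c*(c^2*v^2-a^2))^2 = (0)*(t^2 - (a^2*(a^2-2*b^2) - c^4*v^2)) + ((4)*b^2*c^4)*(s^2 - (1 - v^2)) + ((4)*c^4 + (-4)*c^4*v^2)*(c^2 - (a^2 - b^2))) by ring.
  rewrite H, r1, r2, r3. ring.
Qed.

Lemma G5 (a b c s v t : R) (r1 : t^2 = a^2*(a^2-2*b^2) - c^4*v^2) (r2 : s^2 = 1 - v^2) (r3 : c^2 = a^2 - b^2) :
  (a*(b^2+c^2*s^2)*(a^2+(v^2-2)*c^2))^2 + (-b*(v*c^2*s-t)*(a^2+(v^2-2)*c^2) + 2*b*c^2*s*(v*b^2+t*s))^2 - (c*(c^2*v^2-a^2)*(v*b^2+t*s))^2 = 0.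
Proof.
  assert (H : (a*(b^2+c^2*s^2)*(a^2+(v^2-2)*c^2))^2 + (-b*(v*c^2*s-t)*(a^2+(v^2-2)*c^2) + 2*b*c^2*s*(v*b^2+t*s))^2 - (c*(c^2*v^2-a^2)*(v*b^2+t*s))^2 = ((-1)*c^6*s^2*v^4 + (4)*b^2*c^4 + (-4)*b^2*c^4*v^2 + (1)*b^2*c^4*v^4 + (-8)*b^2*c^4*s^2 + (4)*b^2*c^4*s^2*v^2 + (4)*b^2*c^4*s^4 + (2)*a^2*c^4*s^2*v^2 + (-4)*a^2*b^2*c^2 + (2)*a^2*b^2*c^2*v^2 + (4)*a^2*b^2*c^2*s^2 + (-1)*a^4*c^2*s^2 + (1)*a^4*b^2)*(t^2 - (a^2*(a^2-2*b^2) - c^4*v^2)) + ((1)*c^10*v^6 + (8)*b^2*c^6*s*v*t + (-4)*b^2*c^6*s*v^3*t + (12)*b^2*c^8*v^2 + (-8)*b^2*c^8*v^4 + (1)*b^2*c^8*v^6 + (-4)*b^2*c^8*s^2*v^2 + (8)*b^4*c^4*s*v*t + (12)*b^4*c^6*v^2 + (-8)*b^4*c^6*v^4 + (4)*b^6*c^4*v^2 + (3)*a^2*c^8*v^4 + (4)*a^2*c^8*s^2 + (-4)*a^2*c^8*s^2*v^2 + (1)*a^2*c^8*s^2*v^4 + (-4)*a^2*b^2*c^4*s*v*t + (4)*a^2*b^2*c^6 + (-12)*a^2*b^2*c^6*v^2 + (10)*a^2*b^2*c^6*v^4 + (1)*a^2*b^2*c^6*v^6 + (16)*a^2*b^4*c^4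 + (-12)*a^2*b^4*c^4*v^2 + (-8)*a^2*b^4*c^4*s^2 + (8)*a^2*b^6*c^2 + (-8)*a^2*b^6*c^2*v^2 + (4)*a^4*c^6 + (-1)*a^4*c^6*v^2 + (-3)*a^4*c^6*v^4 + (-1)*a^4*c^6*v^6 + (-4)*a^4*c^6*s^2 + (2)*a^4*c^6*s^2*v^2 + (-16)*a^4*b^2*c^4 + (5)*a^4*b^2*c^4*v^2 + (4)*a^4*b^2*c^4*s^2 + (-24)*a^4*b^4*c^2 + (12)*a^4*b^4*c^2*v^2 + (-4)*a^6*c^4 + (1)*a^6*c^4*v^2 + (1)*a^6*c^4*s^2 + (15)*a^6*b^2*c^2 + (-4)*a^6*b^2*c^2*v^2)*(s^2 - (1 - v^2)) + ((1)*c^8*v^6 + (-1)*c^8*v^8 + (-4)*b^2*c^4*s*v^3*t + (8)*b^2*c^6*v^2 + (-16)*b^2*c^6*v^4 + (7)*b^2*c^6*v^6 + (-4)*b^2*c^6*s^2*v^2 + (4)*b^2*c^6*s^2*v^4 + (4)*b^4*c^4*v^2 + (-4)*b^4*c^4*v^4 + (3)*a^2*c^6*v^4 + (-2)*a^2*c^6*v^6 + (-1)*a^2*c^6*v^8 + (4)*a^2*c^6*s^2 + (-8)*a^2*c^6*s^2*v^2 + (-1)*a^2*c^6*s^2*v^6 + (4)*a^2*b^2*c^2*s*v*t + (4)*a^2*b^2*c^4 + (-4)*a^2*b^2*c^4*v^2 + (1)*a^2*b^2*c^4*v^4 + (8)*a^2*b^4*c^2 + (-16)*a^2*b^4*c^2*v^2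 + (8)*a^2*b^4*c^2*v^4 + (-8)*a^2*b^4*c^2*s^2 + (8)*a^2*b^4*c^2*s^2*v^2 + (4)*a^4*c^4 + (-5)*a^4*c^4*v^2 + (1)*a^4*c^4*v^4 + (-4)*a^4*c^4*s^2 + (-12)*a^4*b^2*c^2 + (17)*a^4*b^2*c^2*v^2 + (-4)*a^4*b^2*c^2*v^4 + (8)*a^4*b^2*c^2*s^2 + (-4)*a^4*b^2*c^2*s^2*v^2 + (1)*a^6*c^2*s^2 + (-1)*a^6*b^2)*(c^2 - (a^2 - b^2))) by ring.
  rewrite H, r1, r2, r3. ring.
Qed.

Lemma from_G (L Rt G d : R) : d <> 0 -> L - Rt = G / d -> G = 0 -> L = Rt.
Proof. intros hd h hG. rewrite hG in h. unfold Rdiv in h. rewrite Rmult_0_l in h. lra. Qed.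

Lemma tang (a b c s v t X Y : R) (ha : 0 < a) (hb : 0 < b) (hc : 0 < c) (hs : 0 < s)
  (h1 : on_tangent a b (a*v, b*s) (X, Y))
  (h2 : on_tangent a b (a*t/(c^2*s), -(b^3/(c^2*s))) (X, Y)) :
  v*b^2+t*s <> 0 /\ X = a*(b^2+c^2*s^2)/(v*b^2+t*s) /\
  Y = -b*(v*c^2*s-t)/(v*b^2+t*s).
Proof.
  unfold on_tangent in h1, h2; cbn [fst snd] in h1, h2.
  assert (E1 : X*v*b+Y*s*a - a*b = a*b*(X * (a*v) / a^2 + Y * (b*s) / b^2 - 1))
    by (field; split; lra).
  assert (E2 : X*t - Y*a*b - a*c^2*s = a*c^2*s*(X * (a*t/(c^2*s)) / a^2 + Y * (-(b^3/(c^2*s))) / b^2 - 1))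
    by (field; repeat split; lra).
  rewrite h1 in E1. rewrite h2 in E2.
  assert (h1z : X*v*b+Y*s*a - a*b = 0) by (rewrite E1; ring).
  assert (h2z : X*t - Y*a*b - a*c^2*s = 0) by (rewrite E2; ring).
  assert (XW : X*a*(v*b^2+t*s) - a^2*(b^2+c^2*s^2) = 0).
  { assert (H : X*a*(v*b^2+t*s) - a^2*(b^2+c^2*s^2) =
       a*b*(X*v*b+Y*s*a - a*b) + s*a*(X*t - Y*a*b - a*c^2*s)) by ring.
    rewrite H, h1z, h2z; ring. }
  assert (YW : Y*a*(v*b^2+t*s) - a*b*(t - c^2*s*v) = 0).
  { assert (H : Y*a*(v*b^2+t*s) - a*b*(t - c^2*s*v) =
       t*(X*v*b+Y*s*a - a*b) - v*b*(X*t - Y*a*b - a*c^2*s)) by ring.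
    rewrite H, h1z, h2z; ring. }
  assert (pos : 0 < a^2*(b^2+c^2*s^2)).
  { apply Rmult_lt_0_compat; nra. }
  assert (hW : v*b^2+t*s <> 0).
  { intro HW. rewrite HW in XW. nra. }
  split; [exact hW|split].
  - assert (H : X = X*a*(v*b^2+t*s)/(a*(v*b^2+t*s))) by (field; split; lra).
    rewrite H. replace (X*a*(v*b^2+t*s)) with (a^2*(b^2+c^2*s^2)) by lra.
    field; split; lra.
  - assert (H : Y = Y*a*(v*b^2+t*s)/(a*(v*b^2+t*s))) by (field; split; lra).
    rewrite H. replace (Y*a*(v*b^2+t*s)) with (a*b*(t - c^2*s*v)) by lra.
    field; split; lra.
Qed.

Lemma circ (a b c s u v t X Y : R)
  (r1 : t^2 = a^2*(a^2-2*b^2) - c^4*v^2) (r2 : s^2 = 1 - v^2) (r3 : c^2 = a^2 - b^2)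
  (huv : u^2 = v^2) (hE : a^2 + (u^2 - 2)*c^2 <> 0) (hW : v*b^2+t*s <> 0)
  (hX : X = a*(b^2+c^2*s^2)/(v*b^2+t*s)) (hY : Y = -b*(v*c^2*s-t)/(v*b^2+t*s)) :
  on_circle (0, - (2*b*c^2*s) / (a^2 + (u^2 - 2)*c^2))
    (Rabs (c * (c^2*u^2 - a^2) / (a^2 + (u^2 - 2)*c^2))) (X, Y).
Proof.
  unfold on_circle; cbn [fst snd]. rewrite pow2_abs. rewrite huv in *. subst X Y.
  apply (from_G _ _ ((a*(b^2+c^2*s^2)*(a^2+(v^2-2)*c^2))^2 + (-b*(v*c^2*s-t)*(a^2+(v^2-2)*c^2) + 2*b*c^2*s*(v*b^2+t*s))^2 - (c*(c^2*v^2-a^2)*(v*b^2+t*s))^2) ((v*b^2+t*s)^2*(a^2+(v^2-2)*c^2)^2)).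
  - apply Rmult_integral_contrapositive; split; apply pow_nonzero; auto.
  - field. split; auto.
  - exact (G5 a b c s v t r1 r2 r3).
Qed.

Theorem mainTheorem3 (a b u : R)
  (hb : 0 < b) (hab : b < a) (hratio : a / b > sqrt 2)
  (hu : Rabs u < umax a b) :
  let c := cfoc a b in
  let Cc := (0, (c^2*u^2 - a^2 + 2*b^2) / (2*b*sqrt (1 - u^2))) in
  let Rr := (a^2 - c^2*u^2) / (2*b*sqrt (1 - u^2)) in
  (on_circle Cc Rr (P1 a b u) /\ on_circle Cc Rr (P2 a b u) /\
   on_circle Cc Rr (P3 a b u) /\ on_circle Cc Rr (P4 a b u) /\
   on_circle Cc Rr (-c, 0) /\ on_circle Cc Rr (c, 0)) /\
  (a^2 + (u^2 - 2)*c^2 <> 0 ->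
   let Cc' := (0, - (2*b*c^2*sqrt (1 - u^2)) / (a^2 + (u^2 - 2)*c^2)) in
   let Rr' := c * (c^2*u^2 - a^2) / (a^2 + (u^2 - 2)*c^2) in
   (forall Q,
      tangent_intersection a b (P1 a b u) (P2 a b u) Q \/
      tangent_intersection a b (P2 a b u) (P3 a b u) Q \/
      tangent_intersection a b (P3 a b u) (P4 a b u) Q \/
      tangent_intersection a b (P4 a b u) (P1 a b u) Q ->
      on_circle Cc' (Rabs Rr') Q) /\
   on_circle Cc' (Rabs Rr') (-c, 0) /\ on_circle Cc' (Rabs Rr') (c, 0)).
Proof.
  intros c Cc Rr. subst Cc Rr.
  assert (ha : 0 < a) by lra.
  assert (hsq2 : sqrt 2 ^ 2 = 2) by (apply pow2_sqrt; lra).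
  assert (hsq2p : 0 <= sqrt 2) by apply sqrt_pos.
  assert (hab2 : 2*b^2 < a^2).
  { assert (H : a = (a/b)*b) by (field; lra).
    assert (H2 : sqrt 2 * b < a) by (rewrite H; apply Rmult_lt_compat_r; lra).
    assert (H3 : 0 <= sqrt 2 * b) by nra.
    assert (H4 : sqrt 2 * b * (sqrt 2 * b) < a * a) by (apply Rmult_le_0_lt_compat; lra).
    replace (sqrt 2 * b * (sqrt 2 * b)) with (sqrt 2 ^ 2 * b^2) in H4 by ring.
    rewrite hsq2 in H4. nra. }
  assert (hc2 : c^2 = a^2 - b^2) by (unfold c, cfoc; apply pow2_sqrt; nra).
  assert (hc : 0 < c) by (unfold c, cfoc; apply sqrt_lt_R0; nra).
  set (q := sqrt (a^2 - 2*b^2)) in hu.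
  assert (hq2 : q^2 = a^2 - 2*b^2) by (unfold q; apply pow2_sqrt; nra).
  unfold umax in hu. change (cfoc a b) with c in hu. fold q in hu.
  assert (hqp : 0 <= q) by (unfold q; apply sqrt_pos).
  assert (hu2 : u^2 < (a/c^2*q)^2).
  { rewrite <- (pow2_abs u). assert (0 <= Rabs u) by apply Rabs_pos. nra. }
  assert (hK : (a/c^2*q)^2 * c^4 = a^2*(a^2-2*b^2)) by (rewrite <- hq2; field; lra).
  assert (hc4 : c^4 = (a^2-b^2)^2) by (rewrite <- hc2; ring).
  assert (hc4p : 0 < c^4) by (apply pow_lt; lra).
  assert (hS0 : c^4*u^2 < a^2*(a^2-2*b^2)) by nra.
  assert (hu1 : u^2 < 1).
  { assert (c^4*u^2 < c^4*1) by nra. nra. }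
  set (s := sqrt (1 - u^2)).
  assert (hs2 : s^2 = 1 - u^2) by (unfold s; apply pow2_sqrt; lra).
  assert (hs : 0 < s) by (unfold s; apply sqrt_lt_R0; lra).
  set (S := sqrt (a^2*(a^2 - 2*b^2) - c^4*u^2)).
  assert (hS2 : S^2 = a^2*(a^2 - 2*b^2) - c^4*u^2) by (unfold S; apply pow2_sqrt; lra).
  assert (EP1 : P1 a b u = (a*u, b*s)) by reflexivity.
  assert (EP3 : P3 a b u = (a*(-u), b*s)) by (unfold P3; f_equal; ring).
  assert (EP2 : P2 a b u = (a*(-S)/(c^2*s), -(b^3/(c^2*s)))).
  { unfold P2. change (cfoc a b) with c. fold s. fold S. f_equal. field. lra. }
  assert (EP4 : P4 a b u = (a*S/(c^2*s), -(b^3/(c^2*s)))) by reflexivity.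
  rewrite EP1, EP2, EP3, EP4.
  fold s.
  clearbody S s c.
  assert (r1 : forall t, t^2 = S^2 -> t^2 = a^2*(a^2-2*b^2) - c^4*u^2) by (intros; lra).
  assert (r1' : forall t, t^2 = S^2 -> t^2 = a^2*(a^2-2*b^2) - c^4*(-u)^2) by (intros; nra).
  assert (hs2' : s^2 = 1 - (-u)^2) by nra.
  assert (hb0 : b <> 0) by lra.
  assert (hm : 2*b*s <> 0) by (apply Rmult_integral_contrapositive; split; lra).
  split.
  - unfold on_circle; cbn [fst snd].
    repeat split.
    + apply (from_G _ _ ((a*u)^2*(2*b*s)^2 + (b*s*(2*b*s) - (c^2*u^2-a^2+2*b^2))^2 - (a^2-c^2*u^2)^2) ((2*b*s)^2)).
      * apply pow_nonzero; auto.
      * field. split; lra.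
      * apply (G1 a b c s u S); auto.
    + apply (from_G _ _ ((a*S*(2*b*s))^2 + (b^3*(2*b*s) + (c^2*u^2-a^2+2*b^2)*c^2*s)^2 - ((a^2-c^2*u^2)*c^2*s)^2) ((c^2*s*(2*b*s))^2)).
      * apply pow_nonzero; apply Rmult_integral_contrapositive; split; auto.
        apply Rmult_integral_contrapositive; split; [apply pow_nonzero|]; lra.
      * field. repeat split; lra.
      * apply (G2 a b c s u S); auto.
    + apply (from_G _ _ ((-(a*u))^2*(2*b*s)^2 + (b*s*(2*b*s) - (c^2*u^2-a^2+2*b^2))^2 - (a^2-c^2*u^2)^2) ((2*b*s)^2)).
      * apply pow_nonzero; auto.
      * field. split; lra.
      * apply (G3 a b c s u S); auto.
    + apply (from_G _ _ ((a*S*(2*b*s))^2 + (b^3*(2*b*s) + (c^2*u^2-a^2+2*b^2)*c^2*s)^2 - ((a^2-c^2*u^2)*c^2*s)^2) ((c^2*s*(2*b*s))^2)).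
      * apply pow_nonzero; apply Rmult_integral_contrapositive; split; auto.
        apply Rmult_integral_contrapositive; split; [apply pow_nonzero|]; lra.
      * field. repeat split; lra.
      * apply (G2 a b c s u S); auto.
    + apply (from_G _ _ (c^2*(2*b*s)^2 + (c^2*u^2-a^2+2*b^2)^2 - (a^2-c^2*u^2)^2) ((2*b*s)^2)).
      * apply pow_nonzero; auto.
      * field. split; lra.
      * apply (GF a b c s u S); auto.
    + apply (from_G _ _ (c^2*(2*b*s)^2 + (c^2*u^2-a^2+2*b^2)^2 - (a^2-c^2*u^2)^2) ((2*b*s)^2)).
      * apply pow_nonzero; auto.
      * field. split; lra.
      * apply (GF a b c s u S); auto.
  - intros hE. cbv zeta.
    assert (fo : forall x, x^2 = c^2 -> on_circle (0, - (2*b*c^2*s) / (a^2 + (u^2 - 2)*c^2))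
        (Rabs (c * (c^2*u^2 - a^2) / (a^2 + (u^2 - 2)*c^2))) (x, 0)).
    { intros x hx. unfold on_circle; cbn [fst snd]. rewrite pow2_abs.
      apply (from_G _ _ (c^2*(a^2+(u^2-2)*c^2)^2 + (2*b*c^2*s)^2 - (c*(c^2*u^2-a^2))^2) ((a^2 + (u^2 - 2)*c^2)^2)).
      * apply pow_nonzero; auto.
      * replace ((x-0)^2) with (c^2) by (rewrite <- hx; ring). field. auto.
      * apply (GF2 a b c s u S); auto. }
    split; [|split; apply fo; ring].
    intros [X Y] HQ. unfold tangent_intersection in HQ.
    destruct HQ as [[h1 h2]|[[h1 h2]|[[h1 h2]|[h1 h2]]]].
    + destruct (tang a b c s u (-S) X Y ha hb hc hs h1 h2) as [hW [hX hY]].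
      apply (circ a b c s u u (-S)); auto. nra.
    + destruct (tang a b c s (-u) (-S) X Y ha hb hc hs h2 h1) as [hW [hX hY]].
      apply (circ a b c s u (-u) (-S)); auto. nra. ring.
    + destruct (tang a b c s (-u) S X Y ha hb hc hs h1 h2) as [hW [hX hY]].
      apply (circ a b c s u (-u) S); auto. ring.
    + destruct (tang a b c s u S X Y ha hb hc hs h2 h1) as [hW [hX hY]].
      apply (circ a b c s u u S); auto.
Qed.
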